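(* Let $m,n,a$ be integers satisfying $0\le a\le m\le n$. Then $$B_m=(-1)^{a}\sum_{k=1}^{n+1}\frac{(-1)^{k+1}}{k}\binom{n+1}{k}\left[\sum_{i=1}^{k-1}i^a(k-i)^{m-a}+\delta_{a,m}\,k^m\right],$$ where $\delta_{a,m}$ is the Kronecker delta. Furthermore, if $m\ge 2$, then $$B_m=(-1)^{a}\sum_{k=1}^{n+1}\frac{(-1)^{k+1}}{k}\binom{n+1}{k}\sum_{i=1}^{k-1}i^a(k-i)^{m-a}.$$
   Context: The Bernoulli numbers $B_m$ ($m\ge 0$) are defined by the generating function $\frac{x}{e^x-1}=\sum_{m=0}^{\infty}\frac{B_m}{m!}x^m$ (so $B_1=-1/2$). An empty sum (e.g. $\sum_{i=1}^{0}$) is $0$; in the sums all bases $i$, $k-i$, $k$ are positive integers, and $t^0=1$. *)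

(* Defs.v *)
From mathcomp Require Import all_boot all_order all_algebra.
Set Implicit Arguments. Unset Strict Implicit. Unset Printing Implicit Defensive.
Import Order.TTheory GRing.Theory Num.Theory.
Local Open Scope ring_scope.

(* Bernoulli numbers, characterised by the generating function
     x / (e^x - 1) = \sum_m B_m x^m / m!,
   i.e. the formal power series identity
     (e^x - 1) * (\sum_m B_m x^m / m!) = x.
   Comparing coefficients of x^N (e^x - 1 = \sum_{j>=1} x^j / j!):
     \sum_{k=0}^{N} [N-k >= 1] / (N-k)! * B_k / k!  =  [N == 1].
   This determines B uniquely (B_1 = -1/2 in this convention). *)
Definition bernoulli_gf (B : nat -> rat) : Prop :=
  forall N : nat,
    \sum_(0 <= k < N.+1)
       ((0 < N - k)%N%:R / ((N - k)`!)%:R) * (B k / (k`!)%:R)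
    = (N == 1)%:R.

(* Main.v *)
Require Import Defs.
From mathcomp Require Import all_boot all_order all_algebra.
From mathcomp Require Import zify ring lra.
Set Implicit Arguments. Unset Strict Implicit. Unset Printing Implicit Defensive.
Import Order.TTheory GRing.Theory Num.Theory.
Local Open Scope ring_scope.


Lemma mono_aux (e : nat) : forall l, (l <= e)%N -> forall N, (l < N)%N ->
  \sum_(0 <= k < N.+1) (-1) ^+ k * ('C(N, k))%:R * (k%:R : rat) ^+ l = 0.
Proof.
elim: e => [|e IH] l.
  rewrite leqn0 => /eqP -> N HN.
  have := exprDn (1 : rat) (-1) N.
  have HN0 : (N == 0%N) = false by lia.
  rewrite addrN expr0n HN0 /= => /esym H.
  rewrite big_mkord -[RHS]H; apply: eq_bigr => i _.
  by rewrite expr1n mul1r expr0 mulr1 mulr_natr.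
rewrite leq_eqVlt => /orP [/eqP -> | Hl] N HN; last by apply: IH.
case: N HN => // N HN.
rewrite big_nat_recl // expr0n /= mulr0 add0r.
have E : forall k : nat, (-1) ^+ k.+1 * ('C(N.+1, k.+1))%:R * (k.+1%:R : rat) ^+ e.+1
   = - ((N.+1)%:R) * \sum_(0 <= l < e.+1) (('C(e, l))%:R * ((-1) ^+ k * ('C(N, k))%:R * (k%:R) ^+ l)).
  move=> k.
  have HC : ('C(N.+1,k.+1))%:R * (k.+1)%:R = (N.+1)%:R * ('C(N,k))%:R :> rat.
    by rewrite -!natrM mulnC -mul_bin_diag.
  set x := (k.+1)%:R : rat.
  have -> : (-1) ^+ k.+1 * ('C(N.+1, k.+1))%:R * x ^+ e.+1
     = (-1) ^+ k.+1 * (('C(N.+1, k.+1))%:R * x) * x ^+ e.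
     by rewrite [x ^+ _.+1]exprSr [x ^+ e * _]mulrC !mulrA.
  rewrite HC /x -[k.+1]addn1 natrD addrC exprDn big_mkord !mulr_sumr.
  apply: eq_bigr => i _.
  rewrite expr1n mul1r addn1 exprS mulN1r.
  rewrite -mulr_natr.
  set p := (-1) ^+ k; set q := (k%:R : rat) ^+ i.
  ring.
rewrite (eq_bigr _ (fun k _ => E k)) -mulr_sumr exchange_big_nat /=.
rewrite big_nat big1 ?mulr0 // => i /andP [_ Hi].
rewrite -mulr_sumr IH ?mulr0 //; lia.
Qed.

Lemma mono1 N e : (e < N)%N ->
  \sum_(1 <= k < N.+1) (-1) ^+ k.+1 * ('C(N, k))%:R * (k%:R : rat) ^+ e = (e == 0%N)%:R.
Proof.
move=> H; have := mono_aux (leqnn e) H.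
rewrite big_nat_recl // expr0 mul1r bin0 mul1r expr0n big_add1 /= => /eqP.
rewrite addrC addr_eq0 => /eqP E.
rewrite -[RHS]opprK -E -sumrN; apply: eq_bigr => i _.
by rewrite exprS mulN1r !mulNr.
Qed.



Lemma fact_neq0 n : (n`!)%:R != 0 :> rat.
Proof. by rewrite pnatr_eq0 -lt0n fact_gt0. Qed.

Lemma binf r l : (l <= r)%N ->
  ('C(r, l))%:R / (r`!)%:R = ((l`!)%:R * ((r - l)`!)%:R)^-1 :> rat.
Proof.
move=> H; rewrite -(bin_fact H) !natrM.
have := fact_neq0 l; have := fact_neq0 (r - l).
have : ('C(r, l))%:R != 0 :> rat by rewrite pnatr_eq0 -lt0n bin_gt0.
move=> h1 h2 h3; field.
by rewrite h1 h2 h3.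
Qed.

Lemma hB2 (B : nat -> rat) (hB : bernoulli_gf B) r :
  \sum_(0 <= t < r.+1) (B t / (t`!)%:R) / ((r.+1 - t)`!)%:R = (r == 0%N)%:R.
Proof.
have := hB r.+1; rewrite big_nat_recr //= subnn /= mul0r addr0 => <-.
apply: eq_big_nat => t /andP [_ Ht].
have -> : (0 < r.+1 - t)%N by lia.
by rewrite mul1r mulrC.
Qed.

Lemma diffp (x : rat) r :
  ((x + 1) ^+ r.+1 - x ^+ r.+1) / (r.+1`!)%:R
  = \sum_(0 <= l < r.+1) x ^+ l / ((l`!)%:R * ((r.+1 - l)`!)%:R).
Proof.
rewrite [x + 1]addrC exprDn big_ord_recr /= subnn expr0 mul1r binn mulr1n addrK.
rewrite big_mkord mulr_suml; apply: eq_bigr => i _.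
rewrite expr1n mul1r -mulr_natr -mulrA binf //.
by apply: ltnW; rewrite ltn_ord.
Qed.

Lemma keyK (B : nat -> rat) (hB : bernoulli_gf B) (x : rat) p :
  \sum_(0 <= t < p.+1) (B t / (t`!)%:R) *
     \sum_(0 <= l < (p - t).+1) x ^+ l / ((l`!)%:R * (((p - t).+1 - l)`!)%:R)
  = x ^+ p / (p`!)%:R.
Proof.
have E1 : forall t, (t < p.+1)%N ->
  (B t / (t`!)%:R) * \sum_(0 <= l < (p - t).+1) x ^+ l / ((l`!)%:R * (((p - t).+1 - l)`!)%:R)
  = \sum_(0 <= l < p.+1) (if (l < (p - t).+1)%N then
       (B t / (t`!)%:R) * (x ^+ l / ((l`!)%:R * (((p - t).+1 - l)`!)%:R)) else 0).
  move=> t Ht.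
  rewrite (@big_nat_widen _ _ _ 0 _ p.+1); last by lia.
  by rewrite mulr_sumr big_mkcond.
rewrite (eq_big_nat _ _ (fun t (Ht : (0 <= t < p.+1)%N) => E1 t (proj2 (elimT andP Ht)))) exchange_big_nat /=.
have E2 : forall l, (l < p.+1)%N ->
  \sum_(0 <= t < p.+1) (if (l < (p - t).+1)%N then
       (B t / (t`!)%:R) * (x ^+ l / ((l`!)%:R * (((p - t).+1 - l)`!)%:R)) else 0)
  = x ^+ l / (l`!)%:R * ((p - l)%N == 0%N)%:R.
  move=> l Hl.
  rewrite (@big_cat_nat _ _ _ (p - l).+1) //=; last by lia.
  rewrite [X in _ + X]big_nat [X in _ + X]big1 ?addr0; last first.
    by move=> t /andP [Ht1 Ht2]; have -> : (l < (p - t).+1)%N = false by lia.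
  transitivity (x ^+ l / (l`!)%:R * \sum_(0 <= t < (p - l).+1) (B t / (t`!)%:R) / (((p - l).+1 - t)`!)%:R); last by rewrite hB2.
  rewrite mulr_sumr; apply: eq_big_nat => t /andP [_ Ht].
  have -> : (l < (p - t).+1)%N by lia.
  have -> : ((p - t).+1 - l)%N = ((p - l).+1 - t)%N by lia.
  rewrite invfM. 
  set u := ((_ - t)`!)%:R. set v := (l`!)%:R. set w := (t`!)%:R.
  field.
  rewrite /u /v /w !fact_neq0 //.
rewrite (eq_big_nat _ _ (fun t (Ht : (0 <= t < p.+1)%N) => E2 t (proj2 (elimT andP Ht)))).
rewrite big_nat_recr //= subnn eqxx mulr1 big_nat big1 ?add0r // => l /andP [_ Hl].
have -> : (p - l == 0)%N = false by lia.
by rewrite mulr0.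
Qed.

Lemma faul (B : nat -> rat) (hB : bernoulli_gf B) p k :
  \sum_(0 <= i < k) (i%:R : rat) ^+ p / (p`!)%:R
  = \sum_(0 <= t < p.+1) (B t / (t`!)%:R) * ((k%:R) ^+ (p - t).+1 / (((p - t).+1)`!)%:R).
Proof.
elim: k => [|k IH].
  rewrite big_geq // big1 // => t _.
  by rewrite expr0n /= mul0r mulr0.
rewrite big_nat_recr //= IH -(keyK hB (k%:R) p) -big_split /=.
apply: eq_bigr => t _.
rewrite -diffp -mulrDr; congr (_ * _).
rewrite -natr1 mulrBl addrC subrK. done.
Qed.



Lemma Sconv (a m k : nat) : (a <= m)%N -> (1 <= k)%N ->
  \sum_(1 <= i < k) ((i%:R : rat) ^+ a * (k - i)%:R ^+ (m - a))
         + (a == m)%:R * k%:R ^+ m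
  = \sum_(0 <= i < k) (i%:R : rat) ^+ (m - a) * (k - i)%:R ^+ a.
Proof.
move=> ham; case: k => // k _.
rewrite big_add1 /= [in RHS]big_nat_recl // big_nat_rev /= expr0n subn0 [in RHS]addrC.
congr (_ + _).
  apply: eq_big_nat => i /andP [_ Hi].
  have -> : (0 + k - i.+1).+1 = (k - i)%N by lia.
  have -> : (k.+1 - (k - i))%N = i.+1 by lia.
  by rewrite subSS mulrC.
case: eqP => [->|Hne]; first by rewrite subnn !eqxx.
have -> : (m - a == 0)%N = false by lia.
by rewrite !mul0r.
Qed.

Definition cc (B : nat -> rat) (a b j t : nat) : rat :=
  ('C(a, j))%:R * (-1) ^+ j * (((b + j)`!)%:R) * (B t / (t`!)%:R)
   / (((b + j - t).+1)`!)%:R.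

Lemma Sexp (B : nat -> rat) (hB : bernoulli_gf B) (a b k : nat) :
  \sum_(0 <= i < k) (i%:R : rat) ^+ b * (k - i)%:R ^+ a
  = \sum_(0 <= j < a.+1) \sum_(0 <= t < (b + j).+1)
       cc B a b j t * ((k%:R) ^+ (a - j) * (k%:R) ^+ (b + j - t).+1).
Proof.
transitivity (\sum_(0 <= i < k) \sum_(0 <= j < a.+1)
   (('C(a, j))%:R * (-1) ^+ j * (k%:R) ^+ (a - j)) * (i%:R : rat) ^+ (b + j)).
  apply: eq_big_nat => i /andP [_ Hi].
  rewrite natrB; last by lia.
  rewrite exprDn big_mkord mulr_sumr; apply: eq_bigr => j _.
  rewrite (exprNn (i%:R)) -[_ *+ 'C(a, j)]mulr_natr exprD.
  set X := (k%:R : rat) ^+ _; set Y := (i%:R : rat) ^+ b; set Z := (i%:R : rat) ^+ j.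
  set W := (-1 : rat) ^+ j.
  ring.
rewrite exchange_big_nat; apply: eq_big_nat => j /andP [_ Hj].
rewrite -mulr_sumr.
have -> : \sum_(0 <= i < k) (i%:R : rat) ^+ (b + j)
   = ((b + j)`!)%:R * \sum_(0 <= i < k) (i%:R : rat) ^+ (b + j) / ((b + j)`!)%:R.
  rewrite mulr_sumr; apply: eq_bigr => i _.
  have := fact_neq0 (b + j); set u := ((b + j)`!)%:R; move=> hu.
  by field.
rewrite (faul hB) !mulr_sumr; apply: eq_bigr => t _.
rewrite /cc.
set X := (k%:R : rat) ^+ (a - j); set Y := (k%:R : rat) ^+ _.+1.
set W := (-1 : rat) ^+ j.
have := fact_neq0 ((b + j - t).+1); set u := (_.+1`!)%:R; move=> hu.
field.
by rewrite !fact_neq0.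
Qed.



Lemma collapse (B : nat -> rat) a b :
  \sum_(0 <= j < a.+1) \sum_(0 <= t < (b + j).+1)
     cc B a b j t * (((a - j) + (b + j - t))%N == 0%N)%:R = (-1) ^+ a * B (b + a)%N.
Proof.
rewrite big_nat_recr //= [X in X + _]big_nat big1 ?add0r; last first.
  move=> j /andP [_ Hj]; rewrite big1 // => t _.
  have -> : ((a - j) + (b + j - t) == 0)%N = false by lia.
  by rewrite mulr0.
rewrite big_nat_recr //= [X in X + _]big_nat big1 ?add0r; last first.
  move=> t /andP [_ Ht].
  have -> : ((a - a) + (b + a - t) == 0)%N = false by lia.
  by rewrite mulr0.
rewrite !subnn /= mulr1 /cc binn subnn mul1r.
have := fact_neq0 (b + a); set u := ((b + a)`!)%:R => hu.
have -> : (1`!)%:R = 1 :> rat by [].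
set W := (-1) ^+ a; field.
by [].
Qed.

Lemma part1 (B : nat -> rat) (hB : bernoulli_gf B) (m n a : nat)
    (ham : (a <= m)%N) (hmn : (m <= n)%N) :
    \sum_(1 <= k < n.+2)
      ((-1) ^+ k.+1 / k%:R * ('C(n.+1, k))%:R *
        (\sum_(1 <= i < k) (i%:R ^+ a * (k - i)%:R ^+ (m - a))
         + (a == m)%:R * k%:R ^+ m)) = (-1) ^+ a * B m.
Proof.
set b := (m - a)%N.
transitivity (\sum_(1 <= k < n.+2) \sum_(0 <= j < a.+1) \sum_(0 <= t < (b + j).+1)
   cc B a b j t * ((-1) ^+ k.+1 * ('C(n.+1, k))%:R * (k%:R : rat) ^+ ((a - j) + (b + j - t)))).
  apply: eq_big_nat => k /andP [Hk _].
  rewrite Sconv // (Sexp hB) !mulr_sumr; apply: eq_bigr => j _.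
  rewrite mulr_sumr; apply: eq_bigr => t _.
  rewrite [(k%:R : rat) ^+ _.+1]exprS exprD.
  have hk : (k%:R : rat) != 0 by rewrite pnatr_eq0; lia.
  set P := (-1 : rat) ^+ k.+1; set X := (k%:R : rat) ^+ (a - j); set Y := (k%:R : rat) ^+ (b + j - t).
  by field.
rewrite exchange_big_nat /=.
transitivity (\sum_(0 <= j < a.+1) \sum_(0 <= t < (b + j).+1)
     cc B a b j t * (((a - j) + (b + j - t))%N == 0%N)%:R).
  apply: eq_big_nat => j /andP [_ Hj].
  rewrite exchange_big_nat /=; apply: eq_big_nat => t /andP [_ Ht].
  rewrite -mulr_sumr mono1 //; lia.
rewrite collapse; congr (_ * B _); lia.
Qed.

Unset Implicit Arguments.
Set Strict Implicit.
Theorem theorem2 (B : nat -> rat) (hB : bernoulli_gf B) (m n a : nat)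
    (ham : (a <= m)%N) (hmn : (m <= n)%N) :
  B m = (-1) ^+ a *
    \sum_(1 <= k < n.+2)
      ((-1) ^+ k.+1 / k%:R * ('C(n.+1, k))%:R *
        (\sum_(1 <= i < k) (i%:R ^+ a * (k - i)%:R ^+ (m - a))
         + (a == m)%:R * k%:R ^+ m))
  /\
  ((2 <= m)%N ->
   B m = (-1) ^+ a *
    \sum_(1 <= k < n.+2)
      ((-1) ^+ k.+1 / k%:R * ('C(n.+1, k))%:R *
        \sum_(1 <= i < k) (i%:R ^+ a * (k - i)%:R ^+ (m - a)))).
Proof.
have P1 := part1 hB ham hmn.
split; first by rewrite P1 signrMK.
move=> hm2; rewrite -[LHS](signrMK a) -P1; congr (_ * _).
case: (eqVneq a m) => [Eam|Hne]; last first.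
  by apply: eq_big_nat => k _; rewrite mul0r addr0.
rewrite Eam ?eqxx.
under eq_big_nat => k /andP [Hk _].
  rewrite mul1r mulrDr.
  over.
rewrite big_split /= -[RHS]addr0; congr (_ + _).
transitivity (\sum_(1 <= k < n.+2) (-1) ^+ k.+1 * ('C(n.+1, k))%:R * (k%:R : rat) ^+ (m.-1)).
  apply: eq_big_nat => k /andP [Hk _].
have hk : (k%:R : rat) != 0 by rewrite pnatr_eq0; lia.
have -> : m = (m.-1).+1 by lia.
rewrite [(k%:R : rat) ^+ _.+1]exprS /=.
set P := (-1 : rat) ^+ k.+1; set X := (k%:R : rat) ^+ _.
  by field.
rewrite (@mono1 n.+1 m.-1); last lia.
by have -> : (m.-1 == 0)%N = false by lia.
Qed.
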